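(* Let $H$ be an undirected simple graph on a vertex set $V$ with $|V|=n$, and let $\tilde d$ be the average degree of $H$. Let $w$ be chosen uniformly at random from $V$, and let $N_w(H)$ be the graph on vertex set $V$ obtained from $H$ by deleting every edge incident to a vertex of $\Gamma_H(w)$. Then the expected number of edges deleted, $\mathbb{E}\big[|E(H)|-|E(N_w(H))|\big]$, is at least $\binom{\tilde d+1}{2}=\frac{(\tilde d+1)\tilde d}{2}$.
   Context: $\Gamma_H(w)$ denotes the set of neighbours of $w$ in $H$ (not including $w$ itself). In the paper this is applied to a random sequence $G_0=G$, $G_{i+1}=N_{v_{i+1}}(G_i)$, where the $v_i$ are chosen independently and uniformly at random from $V(G_0)$; the statement is that, conditionally on $G_i$ with average degree $\tilde d$, the number of edges decreases in expectation by at least $\binom{\tilde d+1}{2}$ when going from $G_i$ to $G_{i+1}$. *)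

(* Defs.v *)
From mathcomp Require Import all_boot all_order all_algebra.
Set Implicit Arguments. Unset Strict Implicit. Unset Printing Implicit Defensive.
Import Order.TTheory GRing.Theory Num.Theory.

(* A simple undirected graph H on the finite vertex set T is given by a
   symmetric irreflexive relation e : rel T. *)

Definition nbhd (T : finType) (e : rel T) (w : T) : {set T} := [set v | e w v].

Definition edges (T : finType) (e : rel T) : {set {set T}} :=
  [set A : {set T} | [exists x, exists y, e x y && (A == [set x; y])]].

Definition Nw (T : finType) (e : rel T) (w : T) : rel T :=
  fun x y => [&& e x y, x \notin nbhd e w & y \notin nbhd e w].

Definition avg_degree (R : realFieldType) (T : finType) (e : rel T) : R :=
  (\sum_(v : T) #|nbhd e v|)%:R / #|T|%:R.

Definition expected_deleted (R : realFieldType) (T : finType) (e : rel T) : R :=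
  (\sum_(w : T) ((#|edges e|)%:R - (#|edges (Nw e w)|)%:R)) / #|T|%:R.

(* Main.v *)
Require Import Defs.
From mathcomp Require Import all_boot all_order all_algebra.
Import Order.TTheory GRing.Theory Num.Theory.

Lemma edges_card2 (T : finType) (f : rel T) :
  symmetric f -> irreflexive f ->
  (#|edges f| * 2 = #|[set p : (T * T)%type | f p.1 p.2]|)%N.
Proof.
move=> fs fi.
rewrite -(sum1_card (mem [set p : (T * T)%type | f p.1 p.2])).
rewrite (partition_big (fun p : (T * T)%type => [set p.1; p.2]) (fun A => A \in edges f)); last first.
  case=> x y; rewrite !inE /= => fxy; apply/existsP; exists x; apply/existsP; exists y.
  by rewrite fxy eqxx.
rewrite -sum_nat_const; apply: eq_bigr => A.
rewrite inE => /existsP[x /existsP[y /andP[fxy /eqP->]]].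
have xy : x != y by apply: contraTneq fxy => ->; rewrite fi.
have : (x, y) != (y, x) by rewrite xpair_eqE negb_and xy.
move=> /negbTE nxy.
rewrite -[2%N]/((~~ false).+1) -nxy -(cards2 (x, y) (y, x)) -sum1_card.
apply: eq_bigl; case=> a b; rewrite !inE /=.
apply/idP/idP.
  case/orP=> /eqP [-> ->]; apply/andP; split => //; first by rewrite fs.
  by rewrite setUC.
case/andP=> fab /eqP E.
have ab : a != b by apply: contraTneq fab => ->; rewrite fi.
have : a \in [set x; y] by rewrite -E !inE eqxx.
have : b \in [set x; y] by rewrite -E !inE eqxx orbT.
rewrite !inE => /orP[] /eqP Hb /orP[] /eqP Ha; move: ab;
  by rewrite Ha Hb !xpair_eqE ?eqxx ?orbT.
Qed.

Lemma sum_ind (U : finType) (a : pred U) :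
  (\sum_(u : U) (a u : nat) = #|[set u | a u]|)%N.
Proof.
rewrite -sum1_card [RHS]big_mkcond; apply: eq_bigr => u _; rewrite inE; by case: ifP.
Qed.

Lemma card_pairs (T : finType) (P : T -> T -> bool) :
  #|[set p : (T * T)%type | P p.1 p.2]| = (\sum_x \sum_y (P x y : nat))%N.
Proof. by rewrite -sum_ind (pair_big xpredT xpredT (fun x y => (P x y : nat))). Qed.

Lemma deg_sum (T : finType) (e : rel T) x :
  #|nbhd e x| = (\sum_y (e x y : nat))%N.
Proof. by rewrite (@sum_ind _ (e x)). Qed.

Lemma Nw_sym (T : finType) (e : rel T) w : symmetric e -> symmetric (Nw e w).
Proof. by move=> es x y; rewrite /Nw (es x y); congr (_ && _); apply: andbC. Qed.

Lemma Nw_irr (T : finType) (e : rel T) w : irreflexive e -> irreflexive (Nw e w).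
Proof. by move=> ei x; rewrite /Nw ei. Qed.

Lemma del2 (T : finType) (e : rel T) w : symmetric e -> irreflexive e ->
  (#|edges (Nw e w)| <= #|edges e|)%N /\
  ((#|edges e| - #|edges (Nw e w)|) * 2 =
    \sum_x \sum_y (e x y && (e w x || e w y) : nat))%N.
Proof.
move=> es ei.
have h1 := edges_card2 _ _ es ei.
have h2 := edges_card2 _ _ (Nw_sym _ _ w es) (Nw_irr _ _ w ei).
set A := [set p : (T * T)%type | e p.1 p.2] in h1.
set B := [set p : (T * T)%type | Nw e w p.1 p.2] in h2.
have BA : B \subset A by apply/subsetP => p; rewrite !inE /Nw => /andP[].
have := cardsID B A.
have -> : A :&: B = B by apply/setIidPr.
have -> : A :\: B = [set p : (T * T)%type | e p.1 p.2 && (e w p.1 || e w p.2)].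
  apply/setP => p; rewrite !inE /Nw /nbhd !inE.
  by case: (e p.1 p.2) (e w p.1) (e w p.2) => [] [] [].
rewrite (card_pairs _ (fun x y => e x y && (e w x || e w y))) => h.
split.
  by rewrite -(leq_pmul2r (isT : (0 < 2)%N)) h1 h2 -h leq_addr.
by rewrite mulnBl h1 h2 -h addKn.
Qed.

Lemma count_main (T : finType) (e : rel T) : symmetric e -> irreflexive e ->
  (\sum_x #|nbhd e x| * (#|nbhd e x|).+1 <=
   \sum_w \sum_x \sum_y (e x y && (e w x || e w y) : nat))%N.
Proof.
move=> es ei.
rewrite exchange_big /=; apply: leq_sum => x _.
rewrite exchange_big /=.
rewrite {1}deg_sum big_distrl /=; apply: leq_sum => y _.
case exy: (e x y); last by rewrite mul0n.
rewrite mul1n (@sum_ind _ (fun w => e w x || e w y)).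
have <- : #|x |: nbhd e x| = (#|nbhd e x|).+1.
  by rewrite cardsU1 /nbhd inE ei.
apply: subset_leq_card; apply/subsetP => w; rewrite !inE /nbhd.
case/orP => [/eqP -> | ]; first by rewrite exy orbT.
by rewrite es => ->.
Qed.

Lemma cs_nat (T : finType) (d : T -> nat) :
  ((\sum_x d x) ^ 2 <= #|T| * \sum_x d x ^ 2)%N.
Proof.
have E : ((\sum_x d x) ^ 2 = \sum_x \sum_y d x * d y)%N.
  by rewrite -mulnn big_distrl /=; apply: eq_bigr => x _; rewrite big_distrr.
have H1 : (2 * (\sum_x \sum_y d x * d y) <= \sum_x \sum_y (d x ^ 2 + d y ^ 2))%N.
  rewrite big_distrr /=; apply: leq_sum => x _.
  rewrite big_distrr /=; apply: leq_sum => y _.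
  exact: (nat_Cauchy _ _).1.
have H2 : (\sum_x \sum_y (d x ^ 2 + d y ^ 2) = 2 * (#|T| * \sum_x d x ^ 2))%N.
  rewrite (eq_bigr (fun x => #|T| * d x ^ 2 + \sum_y d y ^ 2)%N); last first.
    move=> x _; rewrite big_split /= sum_nat_const //.
  rewrite big_split /= sum_nat_const -big_distrr /= mul2n -addnn //.
rewrite E -(leq_pmul2l (isT : (0 < 2)%N)) -H2 //.
Qed.

From mathcomp Require Import ring zify.
Local Open Scope ring_scope.

Theorem lemma3p2 (R : realFieldType) (T : finType) (e : rel T)
  (e_sym : symmetric e) (e_irr : irreflexive e) (T_nonempty : (0 < #|T|)%N) :
  (avg_degree R e + 1) * avg_degree R e / 2 <= expected_deleted R e.
Proof.
rewrite /avg_degree /expected_deleted.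
set n := #|T|.
set D := (\sum_v #|nbhd e v|)%N.
set S := (\sum_w (#|edges e| - #|edges (Nw e w)|))%N.
have HS : \sum_w ((#|edges e|)%:R - (#|edges (Nw e w)|)%:R) = S%:R :> R.
  rewrite /S natr_sum; apply: eq_bigr => w _.
  by rewrite natrB //; case: (del2 _ e w e_sym e_irr).
rewrite HS.
have key : ((D + n) * D <= 2 * S * n)%N.
  have h1 : (D ^ 2 <= n * \sum_x #|nbhd e x| ^ 2)%N := cs_nat _ (fun x => #|nbhd e x|).
  have h2 := count_main _ e e_sym e_irr.
  have h3 : (2 * S = \sum_w \sum_x \sum_y (e x y && (e w x || e w y) : nat))%N.
    rewrite /S big_distrr /=; apply: eq_bigr => w _.
    by rewrite mulnC; case: (del2 _ e w e_sym e_irr).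
  have h4 : (\sum_x #|nbhd e x| * (#|nbhd e x|).+1 = \sum_x #|nbhd e x| ^ 2 + D)%N.
    rewrite /D -big_split /=; apply: eq_bigr => x _.
    by rewrite mulnS -mulnn addnC.
  move: h1 h2 h3 h4; set Q := (\sum_x _ ^ 2)%N; set Y := (\sum_x (#|nbhd e x| * _))%N; set X := (\sum_w _)%N.
  move=> h1 h2 h3 h4.
  have h5 : (Y * n <= X * n)%N by rewrite leq_mul2r h2 orbT.
  nia.
have n0 : (n%:R : R) != 0 by rewrite pnatr_eq0 -lt0n.
have E1 : ((D%:R / n%:R + 1) * (D%:R / n%:R) / 2 : R) =
   ((D + n) * D)%N%:R / (2 * n * n)%N%:R.
  rewrite !natrM natrD; field; by rewrite n0.
have E2 : (S%:R / n%:R : R) = (2 * S * n)%N%:R / (2 * n * n)%N%:R.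
  rewrite !natrM; field; by rewrite n0.
rewrite E1 E2 ler_wpM2r // ?invr_ge0 ?ler0n // ler_nat //.
Qed.
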